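(* Let $\sigma:\mathbb{R}\to\mathbb{R}$ be an increasing odd homeomorphism. If $p\in X_+=\{(x,y)\in\mathbb{R}^2:x>0,\ y\geq0\}$ is $\sigma$-irrational, then $\bigcup_{n\geq0}\bigcup_{k\geq0}E_\sigma^{-n}\big(\{E_\sigma^k(p)\}\big)$ is dense in $X_+$.
   Context: $h_\sigma(x,y)=(x+\sigma^{-1}(y),y)$, $v_\sigma(x,y)=(x,\sigma(x)+y)$. Let $\Omega=\mathbb{R}^2\setminus\{(0,0)\}$, $X=\{(x,y)\in\Omega:xy\geq0,\ x\neq0\}$, $Y=\{(x,y)\in\Omega:xy\leq0,\ y\neq0\}$, and $A=h_\sigma(X)$, $B=v_\sigma(X)$, $C=h_\sigma^{-1}(Y)$, $D=v_\sigma^{-1}(Y)$ (these partition $\Omega$). The generalized Euclidean algorithm $E_\sigma:\Omega\to\Omega$ is $E_\sigma=h_\sigma^{-1}$ on $A$, $v_\sigma^{-1}$ on $B$, $h_\sigma$ on $C$, $v_\sigma$ on $D$; $E_\sigma^{-n}(S)$ is the preimage under the $n$-th iterate. The $\sigma$-rational lines are the axes $Ox,Oy$, the sets $m(Ox)$ with $m$ in the monoid generated by $h_\sigma,v_\sigma$, and the sets $m(Oy)$ with $m$ in the monoid generated by $h_\sigma^{-1},v_\sigma^{-1}$; a point is $\sigma$-irrational if it lies on none of them. *)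

(* Defs.v *)
From Stdlib Require Import Reals Lra Classical ClassicalEpsilon.
Open Scope R_scope.

Definition pt := (R * R)%type.

(* sigma : R -> R is an increasing odd homeomorphism; its inverse is passed
   explicitly as [si] (the inverse of a bijection is unique). *)
Definition is_homeo (s si : R -> R) : Prop :=
  continuity s /\ continuity si /\
  (forall x, si (s x) = x) /\ (forall y, s (si y) = y).

Definition strictly_increasing (s : R -> R) : Prop :=
  forall x y, x < y -> s x < s y.

Definition odd_fun (s : R -> R) : Prop := forall x, s (- x) = - s x.

Definition hs (s si : R -> R) (p : pt) : pt := (fst p + si (snd p), snd p).
Definition vs (s si : R -> R) (p : pt) : pt := (fst p, s (fst p) + snd p).
Definition hs_inv (s si : R -> R) (p : pt) : pt := (fst p - si (snd p), snd p).
Definition vs_inv (s si : R -> R) (p : pt) : pt := (fst p, snd p - s (fst p)).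

Definition inOmega (p : pt) : Prop := p <> (0, 0).
Definition inX (p : pt) : Prop :=
  inOmega p /\ fst p * snd p >= 0 /\ fst p <> 0.
Definition inY (p : pt) : Prop :=
  inOmega p /\ fst p * snd p <= 0 /\ snd p <> 0.

(* A = h(X), B = v(X), C = h^{-1}(Y), D = v^{-1}(Y), as membership tests
   through the inverse maps *)
Definition inA s si (p : pt) : Prop := inX (hs_inv s si p).
Definition inB s si (p : pt) : Prop := inX (vs_inv s si p).
Definition inC s si (p : pt) : Prop := inY (hs s si p).
Definition inD s si (p : pt) : Prop := inY (vs s si p).

Definition decP (P : Prop) : bool :=
  if excluded_middle_informative P then true else false.

(* The generalized Euclidean algorithm E_sigma.  It is only meaningful on
   Omega (where A,B,C,D partition); outside (i.e. at the origin) it is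
   extended by the identity. *)
Definition Esig (s si : R -> R) (p : pt) : pt :=
  if decP (inA s si p) then hs_inv s si p
  else if decP (inB s si p) then vs_inv s si p
  else if decP (inC s si p) then hs s si p
  else if decP (inD s si p) then vs s si p
  else p.

Definition Eiter (s si : R -> R) (n : nat) (p : pt) : pt := Nat.iter n (Esig s si) p.

(* Words in the monoid generated by two maps: true = first generator. *)
Fixpoint word_apply (f g : pt -> pt) (w : list bool) (p : pt) : pt :=
  match w with
  | nil => p
  | cons b w' => (if b then f else g) (word_apply f g w' p)
  end.

Definition onOx (p : pt) : Prop := snd p = 0.
Definition onOy (p : pt) : Prop := fst p = 0.

Definition on_rational_line (s si : R -> R) (p : pt) : Prop :=
  onOx p \/ onOy p \/
  (exists (w : list bool) (q : pt), onOx q /\ p = word_apply (hs s si) (vs s si) w q) \/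
  (exists (w : list bool) (q : pt), onOy q /\ p = word_apply (hs_inv s si) (vs_inv s si) w q).

Definition sigma_irrational (s si : R -> R) (p : pt) : Prop :=
  ~ on_rational_line s si p.

Definition inXplus (p : pt) : Prop := fst p > 0 /\ snd p >= 0.

Definition dist2 (p q : pt) : R :=
  sqrt ((fst p - fst q) ^ 2 + (snd p - snd q) ^ 2).

Definition backward_orbit_set (s si : R -> R) (p : pt) (r : pt) : Prop :=
  exists n k : nat, Eiter s si n r = Eiter s si k p.

Definition dense_in_Xplus (S : pt -> Prop) : Prop :=
  forall q, inXplus q -> forall eps, eps > 0 ->
    exists r, S r /\ inXplus r /\ dist2 q r < eps.

(* Main.v *)
Require Import Defs.
From Stdlib Require Import Reals Lra Lia List Classical ClassicalEpsilon.
Open Scope R_scope.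

Lemma cont_eps (f : R -> R) x e : continuity f -> e > 0 ->
  exists d, d > 0 /\ forall y, Rabs (y - x) < d -> Rabs (f y - f x) < e.
Proof.
  intros Hc He. destruct (Hc x e He) as [d [Hd H]]. exists d; split; auto.
  intros y Hy. destruct (Req_dec x y) as [<-|Hne].
  - unfold Rminus; rewrite Rplus_opp_r, Rabs_R0; lra.
  - apply (H y). split; [split; [exact I|exact Hne]|]. simpl. unfold Rdist. exact Hy.
Qed.

Lemma eps_cont (f : R -> R) :
  (forall x e, e > 0 -> exists d, d > 0 /\ forall y, Rabs (y - x) < d -> Rabs (f y - f x) < e) ->
  continuity f.
Proof.
  intros H x e He. destruct (H x e He) as [d [Hd H']]. exists d; split; auto.
  intros y [_ Hy]. simpl in *. unfold Rdist in *. apply H'; exact Hy.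
Qed.

Section S.
Variables (s si : R -> R).
Hypothesis Hh : is_homeo s si.
Hypothesis Hinc : strictly_increasing s.
Hypothesis Hodd : odd_fun s.

Lemma s0 : s 0 = 0.
Proof. pose proof (Hodd 0). rewrite Ropp_0 in H. lra. Qed.
Lemma si0 : si 0 = 0.
Proof. destruct Hh as [_ [_ [H1 _]]]. rewrite <- s0 at 1. apply H1. Qed.
Lemma s_si y : s (si y) = y. Proof. destruct Hh as [_ [_ [_ H]]]; auto. Qed.
Lemma si_s y : si (s y) = y. Proof. destruct Hh as [_ [_ [H _]]]; auto. Qed.
Lemma s_le x y : x <= y -> s x <= s y.
Proof. intros [H|H]; [left; apply Hinc; auto| subst; lra]. Qed.
Lemma si_lt x y : x < y -> si x < si y.
Proof. intros H. destruct (Rlt_le_dec (si x) (si y)) as [h|h]; auto.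
  apply s_le in h. rewrite !s_si in h. lra. Qed.
Lemma si_le x y : x <= y -> si x <= si y.
Proof. intros [H|H]; [left; apply si_lt; auto| subst; lra]. Qed.
Lemma si_inc : strictly_increasing si. Proof. intros x y; apply si_lt. Qed.
Lemma s_pos x : x > 0 -> s x > 0. Proof. intros. rewrite <- s0. apply Hinc; lra. Qed.
Lemma si_pos x : x > 0 -> si x > 0. Proof. intros. rewrite <- si0. apply si_lt; lra. Qed.
Lemma si_nonneg x : x >= 0 -> si x >= 0. Proof. intros. rewrite <- si0. apply Rle_ge, si_le; lra. Qed.

Definition br (u : pt) : bool := if Rlt_dec (snd u) (s (fst u)) then true else false.
Definition stepinv (b : bool) : pt -> pt := if b then hs_inv s si else vs_inv s si.

Lemma E_Xplus u : inXplus u -> Esig s si u = stepinv (br u) u.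
Proof.
  destruct u as [x y]. unfold inXplus, br, stepinv; simpl. intros [Hx Hy].
  unfold Esig, decP.
  destruct (Rlt_dec y (s x)) as [Hl|Hl].
  - assert (Hs : si y < x) by (rewrite <- (si_s x); apply si_lt; auto).
    destruct (excluded_middle_informative _) as [_|Hn]; auto. exfalso; apply Hn.
    unfold inA, inX, inOmega, hs_inv; simpl. repeat split.
    + intro E; injection E; intros; lra.
    + apply Rle_ge, Rmult_le_pos; lra.
    + lra.
  - assert (Hs : x <= si y) by (rewrite <- (si_s x); apply si_le; lra).
    assert (Hsx : s x > 0) by (apply s_pos; auto).
    destruct (excluded_middle_informative _) as [HA|_].
    + exfalso. unfold inA, inX, hs_inv in HA; simpl in HA. destruct HA as [_ [H1 H2]].
      assert (x - si y < 0) by lra.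
      destruct Hy as [Hy|Hy].
      * assert ((x - si y) * y < 0) by (apply Rmult_neg_pos; lra). lra.
      * subst. lra.
    + destruct (excluded_middle_informative _) as [_|Hn]; auto. exfalso; apply Hn.
      unfold inB, inX, inOmega, vs_inv; simpl. repeat split.
      * intro E; injection E; intros; lra.
      * apply Rle_ge, Rmult_le_pos; lra.
      * lra.
Qed.

Lemma stepinv_Xplus u : inXplus u -> inXplus (stepinv (br u) u) /\
  fst (stepinv (br u) u) <= fst u /\ snd (stepinv (br u) u) <= snd u.
Proof.
  destruct u as [x y]. unfold inXplus, br, stepinv; simpl. intros [Hx Hy].
  destruct (Rlt_dec y (s x)) as [Hl|Hl]; unfold hs_inv, vs_inv; simpl.
  - assert (Hs : si y < x) by (rewrite <- (si_s x); apply si_lt; auto).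
    pose proof (si_nonneg y Hy). lra.
  - pose proof (s_pos x Hx). lra.
Qed.

Lemma E_Xplus_inv u : inXplus u -> inXplus (Esig s si u) /\
  fst (Esig s si u) <= fst u /\ snd (Esig s si u) <= snd u.
Proof. intros H. rewrite E_Xplus; auto. apply stepinv_Xplus; auto. Qed.

Lemma iter_S' n u : Eiter s si (S n) u = Esig s si (Eiter s si n u).
Proof. reflexivity. Qed.

Lemma iter_Xplus n u : inXplus u -> inXplus (Eiter s si n u) /\
  fst (Eiter s si n u) <= fst u /\ snd (Eiter s si n u) <= snd u.
Proof.
  intros H. induction n. unfold Eiter; simpl; repeat split; try lra; apply H.
  destruct IHn as [H1 [H2 H3]]. destruct (E_Xplus_inv _ H1) as [H4 [H5 H6]].
  rewrite iter_S'. repeat split; try lra; apply H4.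
Qed.

Lemma iter_S n u : Eiter s si (S n) u = Eiter s si n (Esig s si u).
Proof. unfold Eiter. induction n; simpl; auto. simpl in IHn. rewrite IHn. auto. Qed.


Lemma hs_Xplus u : inXplus u -> inXplus (hs s si u).
Proof. destruct u as [x y]; unfold inXplus, hs; simpl; intros [Hx Hy].
  pose proof (si_nonneg y Hy). lra. Qed.
Lemma vs_Xplus u : inXplus u -> inXplus (vs s si u).
Proof. destruct u as [x y]; unfold inXplus, vs; simpl; intros [Hx Hy].
  pose proof (s_pos x Hx). lra. Qed.

Lemma E_hs u : inXplus u -> Esig s si (hs s si u) = u.
Proof.
  intros H. rewrite E_Xplus by (apply hs_Xplus; auto).
  destruct u as [x y]; unfold inXplus, br, stepinv, hs in *; simpl in *. destruct H as [Hx Hy].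
  destruct (Rlt_dec y (s (x + si y))) as [Hl|Hl].
  - unfold hs_inv; simpl. f_equal; ring.
  - exfalso. apply Hl. rewrite <- (s_si y) at 1. apply Hinc. lra.
Qed.
Lemma E_vs u : inXplus u -> Esig s si (vs s si u) = u.
Proof.
  intros H. rewrite E_Xplus by (apply vs_Xplus; auto).
  destruct u as [x y]; unfold inXplus, br, stepinv, vs in *; simpl in *. destruct H as [Hx Hy].
  destruct (Rlt_dec (s x + y) (s x)) as [Hl|Hl].
  - lra.
  - unfold vs_inv; simpl. f_equal; ring.
Qed.

Definition W := word_apply (hs s si) (vs s si).

Lemma W_Xplus w u : inXplus u -> inXplus (W w u).
Proof. intros H; induction w as [|b w IH]; simpl; auto.
  destruct b; [apply hs_Xplus|apply vs_Xplus]; auto. Qed.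

Lemma W_iter w u : inXplus u -> Eiter s si (length w) (W w u) = u.
Proof.
  intros H; induction w as [|b w IH]; [reflexivity|].
  change (length (b :: w)) with (S (length w)). change (W (b :: w) u) with ((if b then hs s si else vs s si) (W w u)).
  rewrite iter_S. destruct b; [rewrite E_hs|rewrite E_vs]; auto; apply W_Xplus; auto.
Qed.

Lemma W_app w1 w2 u : W (w1 ++ w2) u = W w1 (W w2 u).
Proof. unfold W. induction w1 as [|b w IH]; simpl; [reflexivity| rewrite IH; reflexivity]. Qed.

Fixpoint apply_inv (bs : list bool) (u : pt) : pt :=
  match bs with nil => u | b :: bs' => apply_inv bs' (stepinv b u) end.

Lemma apply_inv_snoc bs b u : apply_inv (bs ++ b :: nil) u = stepinv b (apply_inv bs u).
Proof. revert u; induction bs; simpl; auto. Qed.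

Lemma W_apply_inv bs u : W bs (apply_inv bs u) = u.
Proof.
  unfold W. revert u; induction bs as [|b bs IH]; intros u; simpl; auto.
  rewrite IH. destruct b; unfold hs, vs, hs_inv, vs_inv; destruct u; simpl; f_equal; ring.
Qed.


Definition ctn (F : pt -> pt) := forall a e, e > 0 -> exists d, d > 0 /\ forall b,
  Rabs (fst b - fst a) < d -> Rabs (snd b - snd a) < d ->
  Rabs (fst (F b) - fst (F a)) < e /\ Rabs (snd (F b) - snd (F a)) < e.

Lemma ctn_comp F G : ctn F -> ctn G -> ctn (fun u => F (G u)).
Proof.
  intros HF HG a e He. destruct (HF (G a) e He) as [d1 [Hd1 H1]].
  destruct (HG a d1 Hd1) as [d2 [Hd2 H2]]. exists d2; split; auto.
  intros b Hb1 Hb2. destruct (H2 b Hb1 Hb2). apply H1; auto.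
Qed.

Lemma ctn_id : ctn (fun u => u).
Proof. intros a e He. exists e; split; auto. Qed.

Lemma tri u v e : Rabs u < e/2 -> Rabs v < e/2 -> Rabs (u + v) < e.
Proof. intros. pose proof (Rabs_triang u v). lra. Qed.
Lemma tri' u v e : Rabs u < e/2 -> Rabs v < e/2 -> Rabs (u - v) < e.
Proof. intros. pose proof (Rabs_triang u (-v)). rewrite Rabs_Ropp in H1. unfold Rminus. lra. Qed.

Lemma ctn_hsh (g : R -> R) (sg : bool) : continuity g ->
  ctn (fun u => (if sg then fst u + g (snd u) else fst u - g (snd u), snd u)).
Proof.
  intros Hg a e He. destruct (cont_eps g (snd a) (e/2) Hg) as [d1 [Hd1 H1]]. lra.
  exists (Rmin (e/2) d1); split. apply Rmin_pos; lra.
  intros b Hb1 Hb2. pose proof (Rmin_l (e/2) d1). pose proof (Rmin_r (e/2) d1). simpl.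
  split; [|lra]. destruct sg.
  - replace (fst b + g (snd b) - (fst a + g (snd a))) with ((fst b - fst a) + (g (snd b) - g (snd a))) by ring.
    apply tri; [lra| apply H1; lra].
  - replace (fst b - g (snd b) - (fst a - g (snd a))) with ((fst b - fst a) - (g (snd b) - g (snd a))) by ring.
    apply tri'; [lra| apply H1; lra].
Qed.

Lemma ctn_vsh (g : R -> R) (sg : bool) : continuity g ->
  ctn (fun u => (fst u, if sg then g (fst u) + snd u else snd u - g (fst u))).
Proof.
  intros Hg a e He. destruct (cont_eps g (fst a) (e/2) Hg) as [d1 [Hd1 H1]]. lra.
  exists (Rmin (e/2) d1); split. apply Rmin_pos; lra.
  intros b Hb1 Hb2. pose proof (Rmin_l (e/2) d1). pose proof (Rmin_r (e/2) d1). simpl.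
  split; [lra|]. destruct sg.
  - replace (g (fst b) + snd b - (g (fst a) + snd a)) with ((g (fst b) - g (fst a)) + (snd b - snd a)) by ring.
    apply tri; [apply H1; lra|lra].
  - replace (snd b - g (fst b) - (snd a - g (fst a))) with ((snd b - snd a) - (g (fst b) - g (fst a))) by ring.
    apply tri'; [lra| apply H1; lra].
Qed.

Lemma s_cont : continuity s. Proof. destruct Hh as [H _]; auto. Qed.
Lemma si_cont : continuity si. Proof. destruct Hh as [_ [H _]]; auto. Qed.

Lemma ctn_hs : ctn (hs s si).
Proof. apply (ctn_hsh si true si_cont). Qed.
Lemma ctn_hs_inv : ctn (hs_inv s si).
Proof. apply (ctn_hsh si false si_cont). Qed.
Lemma ctn_vs : ctn (vs s si).
Proof. apply (ctn_vsh s true s_cont). Qed.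
Lemma ctn_vs_inv : ctn (vs_inv s si).
Proof. apply (ctn_vsh s false s_cont). Qed.

Lemma ctn_W w : ctn (W w).
Proof.
  unfold W; induction w as [|b w IH]; simpl. apply ctn_id.
  destruct b; [apply (ctn_comp _ _ ctn_hs IH)|apply (ctn_comp _ _ ctn_vs IH)].
Qed.

Lemma ctn_apply_inv bs : ctn (apply_inv bs).
Proof.
  induction bs as [|b bs IH]; simpl. apply ctn_id.
  apply (ctn_comp _ _ IH). destruct b; simpl; [apply ctn_hs_inv|apply ctn_vs_inv].
Qed.

Definition seg (a b : pt) (l : R) : pt :=
  (fst a + l * (fst b - fst a), snd a + l * (snd b - snd a)).

Lemma seg_cont F a b : ctn F ->
  continuity (fun l => fst (F (seg a b l))) /\ continuity (fun l => snd (F (seg a b l))).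
Proof.
  intros HF. set (K := Rabs (fst b - fst a) + Rabs (snd b - snd a) + 1).
  assert (HK : K > 0) by (unfold K; pose proof (Rabs_pos (fst b - fst a)); pose proof (Rabs_pos (snd b - snd a)); lra).
  assert (Hlip : forall l0 e, e > 0 -> exists d, d > 0 /\ forall l, Rabs (l - l0) < d ->
     Rabs (fst (F (seg a b l)) - fst (F (seg a b l0))) < e /\ Rabs (snd (F (seg a b l)) - snd (F (seg a b l0))) < e).
  { intros l0 e He. destruct (HF (seg a b l0) e He) as [d [Hd H]].
    exists (d / K); split. apply Rdiv_lt_0_compat; lra.
    intros l Hl. apply H; unfold seg; simpl.
    - replace (fst a + l * (fst b - fst a) - (fst a + l0 * (fst b - fst a))) with ((l - l0) * (fst b - fst a)) by ring.
      rewrite Rabs_mult. apply Rle_lt_trans with (Rabs (l - l0) * K).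
      apply Rmult_le_compat_l. apply Rabs_pos. unfold K; pose proof (Rabs_pos (snd b - snd a)); lra.
      apply (Rmult_lt_compat_r K) in Hl; auto. unfold Rdiv in Hl. rewrite Rmult_assoc, Rinv_l in Hl; lra.
    - replace (snd a + l * (snd b - snd a) - (snd a + l0 * (snd b - snd a))) with ((l - l0) * (snd b - snd a)) by ring.
      rewrite Rabs_mult. apply Rle_lt_trans with (Rabs (l - l0) * K).
      apply Rmult_le_compat_l. apply Rabs_pos. unfold K; pose proof (Rabs_pos (fst b - fst a)); lra.
      apply (Rmult_lt_compat_r K) in Hl; auto. unfold Rdiv in Hl. rewrite Rmult_assoc, Rinv_l in Hl; lra. }
  split; apply eps_cont; intros l0 e He; destruct (Hlip l0 e He) as [d [Hd H]]; exists d; split; auto;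
    intros l Hl; apply H; auto.
Qed.

Definition nwse (u v : pt) := fst u <= fst v /\ snd u >= snd v.

Lemma stepinv_nwse b u v : nwse u v -> nwse (stepinv b u) (stepinv b v).
Proof.
  destruct u as [x y], v as [x' y']; unfold nwse, stepinv; simpl; intros [H1 H2].
  destruct b; unfold hs_inv, vs_inv; simpl.
  - pose proof (si_le y' y). lra.
  - pose proof (s_le x x'). lra.
Qed.

Lemma apply_inv_nwse bs u v : nwse u v -> nwse (apply_inv bs u) (apply_inv bs v).
Proof. revert u v; induction bs; simpl; auto. intros; apply IHbs, stepinv_nwse; auto. Qed.

Lemma gap (f : R -> R) h : strictly_increasing f -> h > 0 -> forall N : nat,
  exists c, c > 0 /\ forall a, 0 <= a <= INR N * h -> f (a + 2 * h) - f a >= c.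
Proof.
  intros Hf Hh0. assert (Hle : forall x y, x <= y -> f x <= f y).
  { intros x y [H|H]; [left; apply Hf; auto|subst; lra]. }
  induction N as [|N [c [Hc H]]].
  - exists (f (2*h) - f 0). split. pose proof (Hf 0 (2*h)); lra.
    intros a Ha. simpl in Ha. assert (a = 0) by lra. subst. rewrite Rplus_0_l; lra.
  - set (c2 := f ((INR N + 2) * h) - f ((INR N + 1) * h)).
    assert (Hc2 : c2 > 0) by (unfold c2; pose proof (Hf ((INR N + 1) * h) ((INR N + 2) * h)); nra).
    exists (Rmin c c2); split. apply Rmin_pos; auto.
    intros a Ha. rewrite S_INR in Ha. pose proof (Rmin_l c c2); pose proof (Rmin_r c c2).
    destruct (Rle_dec a (INR N * h)) as [Hl|Hl].
    + pose proof (H a (conj (proj1 Ha) Hl)). lra.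
    + pose proof (Hle ((INR N + 2) * h) (a + 2*h)). pose proof (Hle a ((INR N + 1) * h)).
      assert (f ((INR N + 2) * h) <= f (a + 2*h)) by (apply Hle; nra).
      assert (f a <= f ((INR N + 1) * h)) by (apply Hle; nra). unfold c2 in *. lra.
Qed.

Lemma gap' (f : R -> R) h Y : strictly_increasing f -> h > 0 ->
  exists c, c > 0 /\ forall a, 0 <= a <= Y -> f (a + 2 * h) - f a >= c.
Proof.
  intros Hf Hh0. destruct (INR_unbounded (Y / h)) as [N HN].
  destruct (gap f h Hf Hh0 N) as [c [Hc H]]. exists c; split; auto.
  intros a Ha. apply H. split. lra.
  apply Rmult_gt_compat_r with (r := h) in HN; auto. unfold Rdiv in HN.
  rewrite Rmult_assoc, Rinv_l in HN; lra.
Qed.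

Lemma floor_ex t st : 0 <= t -> st > 0 -> exists n : nat, INR n * st <= t < (INR n + 1) * st.
Proof.
  intros Ht Hst. destruct (INR_unbounded (t / st)) as [N HN].
  assert (HtN : t < INR N * st).
  { apply Rmult_gt_compat_r with (r := st) in HN; auto. unfold Rdiv in HN.
    rewrite Rmult_assoc, Rinv_l in HN; lra. }
  clear HN. induction N as [|N IH].
  - simpl in HtN. lra.
  - rewrite S_INR in HtN. destruct (Rlt_dec t (INR N * st)) as [Hl|Hl].
    + apply IH; auto.
    + exists N. lra.
Qed.

Lemma W_repeat a u : W (repeat true a) u = (fst u + INR a * si (snd u), snd u).
Proof.
  unfold W; induction a as [|a IH]; simpl. destruct u; simpl; f_equal; ring.
  rewrite IH. unfold hs; simpl. f_equal. destruct a; simpl; ring.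
Qed.


Lemma dec_mono (u : nat -> R) : Un_decreasing u -> forall n m, (n <= m)%nat -> u m <= u n.
Proof.
  intros Hd n m Hnm. induction Hnm. lra. pose proof (Hd m). lra.
Qed.

Lemma cauchy_of (u : nat -> R) : Un_decreasing u -> (forall n, u n >= 0) -> Cauchy_crit u.
Proof.
  intros Hd Hp. apply CV_Cauchy. apply decreasing_cv; auto.
  exists 0. intros x [i ->]. unfold opp_seq. pose proof (Hp i). lra.
Qed.

Lemma step_cases u : inXplus u ->
  (br u = true /\ Esig s si u = (fst u - si (snd u), snd u)) \/
  (br u = false /\ Esig s si u = (fst u, snd u - s (fst u))).
Proof.
  intros H. rewrite E_Xplus; auto. destruct (br u); [left|right]; split; auto.
Qed.

Lemma br_true u : br u = true -> snd u < s (fst u).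
Proof. unfold br. destruct (Rlt_dec _ _); auto; discriminate. Qed.
Lemma br_false u : br u = false -> snd u >= s (fst u).
Proof. unfold br. destruct (Rlt_dec _ _); try discriminate. lra. Qed.

Section Orbit.
Variable p : pt.
Hypothesis Hp : inXplus p.
Hypothesis Hirr : sigma_irrational s si p.

Let z k := Eiter s si k p.

Lemma z_X k : inXplus (z k).
Proof. apply iter_Xplus; auto. Qed.

Lemma zS k : z (S k) = Esig s si (z k).
Proof. reflexivity. Qed.

Lemma orbit_word k : exists bs, p = W bs (z k).
Proof.
  induction k as [|k [bs IH]]. exists nil; reflexivity.
  exists (bs ++ br (z k) :: nil). rewrite W_app.
  rewrite zS, E_Xplus by apply z_X.
  change (stepinv (br (z k)) (z k)) with (apply_inv (br (z k) :: nil) (z k)).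
  rewrite W_apply_inv. auto.
Qed.

Lemma y_pos k : snd (z k) > 0.
Proof.
  destruct (z_X k) as [_ H]. destruct H as [H|H]; auto. exfalso. apply Hirr.
  right; right; left. destruct (orbit_word k) as [bs Hb]. exists bs, (z k). split; auto.
Qed.

Let xs k := fst (z k).
Let ys k := snd (z k).

Lemma xs_dec : Un_decreasing xs.
Proof. intros n. unfold xs, z. rewrite iter_S'. apply E_Xplus_inv. apply z_X. Qed.
Lemma ys_dec : Un_decreasing ys.
Proof. intros n. unfold ys, z. rewrite iter_S'. apply E_Xplus_inv. apply z_X. Qed.
Lemma xs_C : Cauchy_crit xs.
Proof. apply cauchy_of. apply xs_dec. intros n; destruct (z_X n); unfold xs; lra. Qed.
Lemma ys_C : Cauchy_crit ys.
Proof. apply cauchy_of. apply ys_dec. intros n; destruct (z_X n); unfold ys; lra. Qed.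


Lemma L1 d : d > 0 -> exists k, xs k < d.
Proof.
  intros Hd. apply NNPP; intro Hn.
  assert (H : forall k, xs k >= d) by (intro k; apply Rnot_lt_ge; intro; apply Hn; exists k; auto).
  destruct (ys_C (s d) (s_pos d Hd)) as [N1 HN1].
  assert (HA : forall k, (k >= N1)%nat -> ys (S k) = ys k).
  { intros k Hk. destruct (step_cases (z k) (z_X k)) as [[_ E]|[_ E]]; unfold ys; rewrite zS, E; simpl; auto.
    exfalso. specialize (HN1 (S k) k ltac:(lia) Hk). unfold Rdist, ys in HN1. rewrite zS, E in HN1; simpl in HN1.
    replace (snd (z k) - s (fst (z k)) - snd (z k)) with (- s (fst (z k))) in HN1 by ring.
    rewrite Rabs_Ropp in HN1. pose proof (s_le d (fst (z k)) ltac:(specialize (H k); unfold xs in H; lra)).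
    pose proof (s_pos d Hd). rewrite Rabs_right in HN1; lra. }
  assert (Hc : forall k, (k >= N1)%nat -> ys k = ys N1).
  { intros k Hk. induction Hk; auto. rewrite HA; auto; lia. }
  assert (Hcp : si (ys N1) > 0) by (apply si_pos; apply y_pos).
  destruct (xs_C _ Hcp) as [N2 HN2].
  set (k := Nat.max N1 N2). specialize (HN2 (S k) k ltac:(lia) ltac:(lia)).
  unfold Rdist, xs in HN2. rewrite zS in HN2.
  destruct (step_cases (z k) (z_X k)) as [[Hb E]|[Hb E]].
  - rewrite E in HN2; simpl in HN2. fold (ys k) in HN2. rewrite (Hc k) in HN2 by lia.
    replace (fst (z k) - si (ys N1) - fst (z k)) with (- si (ys N1)) in HN2 by ring.
    rewrite Rabs_Ropp, Rabs_right in HN2; lra.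
  - exfalso. pose proof (HA k ltac:(lia)). unfold ys in H0. rewrite zS, E in H0. simpl in H0.
    pose proof (s_pos (fst (z k)) ltac:(destruct (z_X k); auto)). lra.
Qed.

Lemma L2 d : d > 0 -> exists k, ys k < d.
Proof.
  intros Hd. apply NNPP; intro Hn.
  assert (H : forall k, ys k >= d) by (intro k; apply Rnot_lt_ge; intro; apply Hn; exists k; auto).
  destruct (xs_C (si d) (si_pos d Hd)) as [N1 HN1].
  assert (HA : forall k, (k >= N1)%nat -> xs (S k) = xs k).
  { intros k Hk. destruct (step_cases (z k) (z_X k)) as [[_ E]|[_ E]]; unfold xs; rewrite zS, E; simpl; auto.
    exfalso. specialize (HN1 (S k) k ltac:(lia) Hk). unfold Rdist, xs in HN1. rewrite zS, E in HN1; simpl in HN1.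
    replace (fst (z k) - si (snd (z k)) - fst (z k)) with (- si (snd (z k))) in HN1 by ring.
    rewrite Rabs_Ropp in HN1. pose proof (si_le d (snd (z k)) ltac:(specialize (H k); unfold ys in H; lra)).
    pose proof (si_pos d Hd). rewrite Rabs_right in HN1; lra. }
  assert (Hc : forall k, (k >= N1)%nat -> xs k = xs N1).
  { intros k Hk. induction Hk; auto. rewrite HA; auto; lia. }
  assert (Hcp : s (xs N1) > 0) by (apply s_pos; destruct (z_X N1); auto).
  destruct (ys_C _ Hcp) as [N2 HN2].
  set (k := Nat.max N1 N2). specialize (HN2 (S k) k ltac:(lia) ltac:(lia)).
  unfold Rdist, ys in HN2. rewrite zS in HN2.
  destruct (step_cases (z k) (z_X k)) as [[Hb E]|[Hb E]].
  - exfalso. pose proof (HA k ltac:(lia)). unfold xs in H0. rewrite zS, E in H0. simpl in H0.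
    pose proof (si_pos (snd (z k)) (y_pos k)). lra.
  - rewrite E in HN2; simpl in HN2. fold (xs k) in HN2. rewrite (Hc k) in HN2 by lia.
    replace (snd (z k) - s (xs N1) - snd (z k)) with (- s (xs N1)) in HN2 by ring.
    rewrite Rabs_Ropp, Rabs_right in HN2; lra.
Qed.

Lemma small d : d > 0 -> exists k, fst (z k) < d /\ snd (z k) < d.
Proof.
  intros Hd. destruct (L1 d Hd) as [k1 H1]. destruct (L2 d Hd) as [k2 H2].
  exists (Nat.max k1 k2). pose proof (dec_mono _ xs_dec k1 (Nat.max k1 k2) ltac:(lia)).
  pose proof (dec_mono _ ys_dec k2 (Nat.max k1 k2) ltac:(lia)). unfold xs, ys in *. lra.
Qed.

End Orbit.


Section Div.
Variables (w1 w2 : pt) (dl : R).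
Hypothesis Hw1 : inXplus w1.
Hypothesis Hw2 : inXplus w2.
Hypothesis Hdl : dl > 0.
Hypothesis HD : fst w2 - fst w1 >= 2 * dl.
Hypothesis HH : snd w1 - snd w2 >= 2 * dl.

Let u j := Eiter s si j w1.
Let u' j := Eiter s si j w2.
Let agree j := br (u j) = br (u' j).

Lemma uX j : inXplus (u j) /\ fst (u j) <= fst w1 /\ snd (u j) <= snd w1.
Proof. apply iter_Xplus; auto. Qed.
Lemma uX' j : inXplus (u' j) /\ fst (u' j) <= fst w2 /\ snd (u' j) <= snd w2.
Proof. apply iter_Xplus; auto. Qed.

Lemma inv_count : exists c, c > 0 /\ forall j, (forall i, (i < j)%nat -> agree i) ->
  fst (u' j) - fst (u j) >= 2 * dl /\ snd (u j) - snd (u' j) >= 2 * dl /\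
  (fst (u' j) - fst (u j)) + (snd (u j) - snd (u' j)) >= 4 * dl + c * INR j.
Proof.
  destruct (gap' si dl (snd w2) si_inc Hdl) as [cA [HcA HA]].
  destruct (gap' s dl (fst w1) Hinc Hdl) as [cB [HcB HB]].
  exists (Rmin cA cB); split. apply Rmin_pos; auto.
  pose proof (Rmin_l cA cB); pose proof (Rmin_r cA cB).
  induction j as [|j IH]; intros Hag.
  - unfold u, u', Eiter; simpl. lra.
  - destruct IH as [IH1 [IH2 IH3]]. intros i Hi; apply Hag; lia.
    pose proof (Hag j ltac:(lia)) as Hj. unfold agree in Hj.
    destruct (uX j) as [[Hx Hy] [Hx0 Hy0]]. destruct (uX' j) as [[Hx' Hy'] [Hx0' Hy0']].
    assert (E1 : u (S j) = Esig s si (u j)) by reflexivity.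
    assert (E2 : u' (S j) = Esig s si (u' j)) by reflexivity.
    rewrite E1, E2. rewrite S_INR.
    destruct (step_cases (u j) (proj1 (uX j))) as [[B1 F1]|[B1 F1]];
    destruct (step_cases (u' j) (proj1 (uX' j))) as [[B2 F2]|[B2 F2]];
    rewrite ?F1, ?F2; simpl; try congruence.
    + pose proof (HA (snd (u' j)) ltac:(lra)).
      pose proof (si_le (snd (u' j) + 2 * dl) (snd (u j)) ltac:(lra)). nra.
    + pose proof (HB (fst (u j)) ltac:(lra)).
      pose proof (s_le (fst (u j) + 2 * dl) (fst (u' j)) ltac:(lra)). nra.
Qed.

Lemma itin j : (forall i, (i < j)%nat -> agree i) ->
  exists bs, u j = apply_inv bs w1 /\ u' j = apply_inv bs w2.
Proof.
  induction j as [|j IH]; intros Hag. exists nil; split; reflexivity.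
  destruct IH as [bs [H1 H2]]. intros i Hi; apply Hag; lia.
  exists (bs ++ br (u j) :: nil). rewrite !apply_inv_snoc, <- H1, <- H2.
  assert (E1 : u (S j) = Esig s si (u j)) by reflexivity.
  assert (E2 : u' (S j) = Esig s si (u' j)) by reflexivity.
  rewrite E1, E2, !E_Xplus by (first [apply (proj1 (uX j))|apply (proj1 (uX' j))]).
  pose proof (Hag j ltac:(lia)) as Hj. unfold agree in Hj. rewrite Hj. auto.
Qed.

Lemma diverge : exists J, (forall i, (i < J)%nat -> agree i) /\ ~ agree J.
Proof.
  apply NNPP; intro Hn.
  assert (Hall : forall n, forall i, (i < n)%nat -> agree i).
  { induction n as [|n IH]; intros i Hi. lia.
    destruct (classic (agree n)) as [Ha|Ha].
    - destruct (Nat.eq_dec i n) as [->|Hne]; auto. apply IH; lia.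
    - exfalso; apply Hn; exists n; split; auto. }
  destruct inv_count as [c [Hc Hinv]].
  destruct (INR_unbounded ((fst w2 + snd w1) / c)) as [N HN].
  destruct (Hinv N (Hall N)) as [_ [_ H3]].
  destruct (uX N) as [[Hx Hy] [Hx0 Hy0]]. destruct (uX' N) as [[Hx' Hy'] [Hx0' Hy0']].
  apply Rmult_gt_compat_r with (r := c) in HN; auto. unfold Rdiv in HN.
  rewrite Rmult_assoc, Rinv_l in HN; lra.
Qed.

Lemma seg0 : seg w1 w2 0 = w1.
Proof. destruct w1, w2; unfold seg; simpl; f_equal; ring. Qed.
Lemma seg1 : seg w1 w2 1 = w2.
Proof. destruct w1, w2; unfold seg; simpl; f_equal; ring. Qed.

Lemma rational_pt : exists w t l, t > 0 /\ 0 <= l <= 1 /\ W w (t, 0) = seg w1 w2 l.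
Proof.
  destruct diverge as [J [Hag Hn]]. destruct (itin J Hag) as [bs [H1 H2]].
  destruct inv_count as [c [Hc Hinv]]. destruct (Hinv J Hag) as [D1 [D2 _]].
  unfold agree in Hn.
  assert (Hb1 : br (u J) = false /\ br (u' J) = true).
  { destruct (br (u J)) eqn:E1.
    - exfalso. pose proof (br_true _ E1) as E1'. apply Hn.
      assert (br (u' J) = true).
      { unfold br. destruct (Rlt_dec _ _) as [|Hl]; auto. exfalso; apply Hl.
        pose proof (s_le (fst (u J)) (fst (u' J)) ltac:(lra)). lra. }
      rewrite H; auto.
    - split; auto. destruct (br (u' J)); auto. }
  destruct Hb1 as [B1 B2]. apply br_false in B1. apply br_true in B2.
  rewrite H1 in B1. rewrite H2 in B2.
  set (F := apply_inv bs).
  set (phi := fun l => snd (F (seg w1 w2 l)) - s (fst (F (seg w1 w2 l)))).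
  assert (Hphi : continuity phi).
  { destruct (seg_cont F w1 w2 (ctn_apply_inv bs)) as [C1 C2].
    apply (continuity_minus _ _ C2). apply (continuity_comp _ s C1 s_cont). }
  assert (Hp0 : phi 0 >= 0) by (unfold phi; rewrite seg0; unfold F; lra).
  assert (Hp1 : phi 1 < 0) by (unfold phi; rewrite seg1; unfold F; lra).
  destruct (IVT_cor phi 0 1 Hphi ltac:(lra) ltac:(nra)) as [l [Hl Hz]].
  set (cc := F (seg w1 w2 l)).
  assert (Hnw : nwse w1 (seg w1 w2 l)).
  { unfold nwse, seg; simpl. split; nra. }
  apply (apply_inv_nwse bs) in Hnw. destruct Hnw as [Hn1 _].
  destruct (uX J) as [[Hx _] _]. rewrite H1 in Hx.
  exists (bs ++ false :: nil), (fst cc), l. split; [unfold cc, F; lra|]. split; auto.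
  rewrite W_app. change (W (false :: nil) (fst cc, 0)) with (vs s si (fst cc, 0)). unfold vs; simpl. rewrite Rplus_0_r.
  assert (Hcc : (fst cc, s (fst cc)) = cc).
  { unfold phi in Hz. fold cc in Hz. destruct cc; simpl in *. f_equal; lra. }
  rewrite Hcc. unfold cc, F. apply W_apply_inv.
Qed.

End Div.


Lemma dist_bound a b : sqrt (a ^ 2 + b ^ 2) <= Rabs a + Rabs b.
Proof.
  rewrite <- (sqrt_pow2 (Rabs a + Rabs b)) by (pose proof (Rabs_pos a); pose proof (Rabs_pos b); lra).
  apply sqrt_le_1_alt. rewrite <- (pow2_abs a), <- (pow2_abs b).
  pose proof (Rabs_pos a); pose proof (Rabs_pos b). nra.
Qed.

Lemma main p : inXplus p -> sigma_irrational s si p ->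
  dense_in_Xplus (backward_orbit_set s si p).
Proof.
  intros Hp Hirr [q1 q2] Hq eps Heps. destruct Hq as [Hq1 Hq2]; simpl in Hq1, Hq2.
  set (e := eps / 5). assert (He : e > 0) by (unfold e; lra).
  set (dl := Rmin e (q1 / 2)). assert (Hdl : dl > 0) by (apply Rmin_pos; lra).
  pose proof (Rmin_l e (q1/2)) as Hdl1. pose proof (Rmin_r e (q1/2)) as Hdl2. fold dl in Hdl1, Hdl2.
  set (w1 := (q1 - dl, q2 + e + dl)). set (w2 := (q1 + dl, q2 + e - dl)).
  destruct (rational_pt w1 w2 dl) as [w [t [l [Ht [Hl HW]]]]];
    try (unfold inXplus, w1, w2; simpl; lra); auto.
  destruct (ctn_W w (t, 0) e He) as [d [Hd Hc]].
  destruct (cont_eps si 0 d si_cont Hd) as [d2 [Hd2 Hsi]].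
  pose proof (Rmin_l (Rmin t d) d2). pose proof (Rmin_r (Rmin t d) d2).
  pose proof (Rmin_l t d). pose proof (Rmin_r t d).
  set (m := Rmin (Rmin t d) d2) in *.
  assert (Hm : m > 0) by (apply Rmin_pos; [apply Rmin_pos|]; lra).
  destruct (small p Hp Hirr m Hm) as [k [Hk1 Hk2]].
  set (z := Eiter s si k p) in *.
  assert (Hz : inXplus z) by (apply iter_Xplus; auto).
  assert (Hy : snd z > 0) by (apply (y_pos p Hp Hirr k)).
  assert (Hsy : si (snd z) < d).
  { specialize (Hsi (snd z)). rewrite si0 in Hsi.
    assert (Rabs (snd z - 0) < d2) by (rewrite Rminus_0_r, Rabs_right; lra).
    specialize (Hsi H3). rewrite Rminus_0_r, Rabs_right in Hsi; auto. apply Rle_ge, Rlt_le, si_pos; auto. }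
  pose proof (si_pos _ Hy) as Hsyp.
  destruct Hz as [Hzx Hzy].
  destruct (floor_ex (t - fst z) (si (snd z)) ltac:(lra) Hsyp) as [a [Ha1 Ha2]].
  exists (W (w ++ repeat true a) z). split; [|split].
  - exists (length (w ++ repeat true a)), k. apply W_iter. split; auto.
  - apply W_Xplus. split; auto.
  - rewrite W_app, W_repeat.
    destruct (Hc (fst z + INR a * si (snd z), snd z)) as [C1 C2]; simpl.
    + rewrite Rabs_left1 by lra. lra.
    + rewrite Rminus_0_r, Rabs_right; lra.
    + rewrite HW in C1, C2. unfold seg, w1, w2 in C1, C2; simpl in C1, C2.
      unfold dist2; simpl.
      eapply Rle_lt_trans. apply dist_bound.
      set (r := W w (fst z + INR a * si (snd z), snd z)) in *.
      assert (Hr1 : Rabs (q1 - fst r) < 2 * e).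
      { apply Rabs_def1; apply Rabs_def2 in C1; destruct C1; nra. }
      assert (Hr2 : Rabs (q2 - snd r) < 3 * e).
      { apply Rabs_def1; apply Rabs_def2 in C2; destruct C2; nra. }
      unfold e in *. lra.
Qed.

End S.

Theorem proposition4 (s si : R -> R) (p : pt) :
  is_homeo s si -> strictly_increasing s -> odd_fun s ->
  inXplus p -> sigma_irrational s si p ->
  dense_in_Xplus (backward_orbit_set s si p).
Proof.
  intros H1 H2 H3 H4 H5. eapply main; eauto.
Qed.
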